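(* For an oriented matroid $M$ on a finite ground set $E$, define $\rho(M)=\operatorname{rank}(\Lambda(M))-\operatorname{corank}(M)$, where $\Lambda(M)$ is the circuit lattice of $M$ and $\operatorname{corank}(M)=|E|-\operatorname{rank}(M)$. Then $\rho$ is additive on direct sums, i.e. $\rho(M_1\oplus M_2)=\rho(M_1)+\rho(M_2)$ for oriented matroids $M_1,M_2$, and $\rho$ is monotone under taking minors, i.e. $\rho(N)\le\rho(M)$ whenever $N$ is a minor of $M$ (with the induced orientation); in particular $\rho(M/e)\le\rho(M)$ and $\rho(M\setminus e)\le\rho(M)$ for every $e\in E$.
   Context: Signed circuits of an oriented matroid are signed subsets $X:E\to\{+,-,0\}$, identified with vectors in $\mathbb{Z}^E$ with entries $1,-1,0$. The circuit lattice $\Lambda(M)$ is the subgroup of $\mathbb{Z}^E$ generated by the vectors of all signed circuits of $M$. Following the paper, $\operatorname{rank}(\Lambda(M))$ means the maximum cardinality of an integrally independent set of signed circuits of $M$, where a set $S$ of signed circuit vectors is integrally independent if no element of $S$ lies in the $\mathbb{Z}$-span of the other elements of $S$. $M/e$ and $M\setminus e$ denote contraction and deletion of $e$, with the induced oriented matroid structures. *)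

(* Defs.v *)
From HB Require Import structures.
From mathcomp Require Import all_boot all_order all_algebra.
From mathcomp Require Import boolp.
Set Implicit Arguments. Unset Strict Implicit. Unset Printing Implicit Defensive.
Import Order.TTheory GRing.Theory Num.Theory.

(* A signed subset of T: (positive part, negative part). *)
Definition signed (T : finType) := ({set T} * {set T})%type.

Definition supp {T : finType} (X : signed T) : {set T} := X.1 :|: X.2.
Definition sopp {T : finType} (X : signed T) : signed T := (X.2, X.1).

Definition svec {T : finType} (X : signed T) (x : T) : int :=
  ((x \in X.1)%:Z - (x \in X.2)%:Z)%R.

(* An oriented matroid (given by its signed circuits) on the ground set
   [ground] inside the finite type T. *)
Record OM (T : finType) := mkOM {
  ground : {set T};
  circuits : {set signed T} }.

(* Signed circuit axioms (Bjorner-Las Vergnas-Sturmfels-White-Ziegler). *)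
Definition is_OM {T : finType} (M : OM T) : Prop :=
  (forall X, X \in circuits M ->
     [/\ supp X \subset ground M, [disjoint X.1 & X.2] & supp X != set0])
  /\ (forall X, X \in circuits M -> sopp X \in circuits M)
  /\ (forall X Y, X \in circuits M -> Y \in circuits M ->
        supp X \subset supp Y -> X = Y \/ X = sopp Y)
  /\ (forall X Y e, X \in circuits M -> Y \in circuits M -> X != sopp Y ->
        e \in X.1 -> e \in Y.2 ->
        exists2 Z, Z \in circuits M &
          Z.1 \subset (X.1 :|: Y.1) :\ e /\ Z.2 \subset (X.2 :|: Y.2) :\ e).

Definition om_indep {T : finType} (M : OM T) (I : {set T}) : bool :=
  (I \subset ground M) && [forall X in circuits M, ~~ (supp X \subset I)].

Definition om_rank {T : finType} (M : OM T) : nat :=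
  \max_(I : {set T} | om_indep M I) #|I|.

Definition om_corank {T : finType} (M : OM T) : nat :=
  #|ground M| - om_rank M.

Definition in_Zspan {T : finType} (S : {set signed T}) (v : T -> int) : Prop :=
  exists c : signed T -> int,
    forall x, v x = (\sum_(Y in S) c Y * svec Y x)%R.

Definition int_indep {T : finType} (S : {set signed T}) : Prop :=
  forall X, X \in S -> ~ in_Zspan (S :\ X) (svec X).

(* rank of the circuit lattice: maximum size of an integrally independent
   set of signed circuits. *)
Definition lattice_rank {T : finType} (M : OM T) : nat :=
  \max_(S : {set signed T} | (S \subset circuits M) && `[< int_indep S >]) #|S|.

Definition rho {T : finType} (M : OM T) : int :=
  ((lattice_rank M)%:Z - (om_corank M)%:Z)%R.

Definition om_delete {T : finType} (M : OM T) (e : T) : OM T :=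
  mkOM (ground M :\ e) [set X in circuits M | e \notin supp X].

Definition om_contract {T : finType} (M : OM T) (e : T) : OM T :=
  let R := [set ((X.1 :\ e, X.2 :\ e) : signed T) | X : signed T in circuits M] in
  mkOM (ground M :\ e)
    [set Z in R | (supp Z != set0) &&
       [forall W in R, ~~ ((supp W != set0) && (supp W \proper supp Z))]].

Inductive om_minor {T : finType} : OM T -> OM T -> Prop :=
  | minor_refl M : om_minor M M
  | minor_del N M e : om_minor N M -> om_minor (om_delete N e) M
  | minor_con N M e : om_minor N M -> om_minor (om_contract N e) M.

Definition om_dsum {T1 T2 : finType} (M1 : OM T1) (M2 : OM T2) : OM (T1 + T2)%type :=
  mkOM ((@inl T1 T2) @: ground M1 :|: (@inr T1 T2) @: ground M2)
    ([set ((@inl T1 T2) @: X.1, (@inl T1 T2) @: X.2) | X : signed T1 in circuits M1] :|: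
     [set ((@inr T1 T2) @: X.1, (@inr T1 T2) @: X.2) | X : signed T2 in circuits M2]).

(* Main.v *)
Require Import Defs.
From HB Require Import structures.
From mathcomp Require Import all_boot all_order all_algebra boolp zify.
Set Implicit Arguments. Unset Strict Implicit. Unset Printing Implicit Defensive.
Import Order.TTheory GRing.Theory Num.Theory.

Section Gen.
Variable T : finType.
Implicit Types (M N : OM T) (X Y Z W : signed T) (S : {set signed T}) (I : {set T}).

Lemma bigmax_att (I : finType) (P : pred I) (F : I -> nat) i0 :
  P i0 -> exists i, P i /\ \max_(j | P j) F j = F i.
Proof.
move=> Pi0; have h : 0 < #|P| by apply/card_gt0P; exists i0.
by case: (eq_bigmax_cond F h) => i Pi E; exists i.
Qed.

Lemma LR_ge M S : S \subset circuits M -> int_indep S -> #|S| <= lattice_rank M.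
Proof.
move=> sub ind; rewrite /lattice_rank.
apply: (@leq_bigmax_cond _ (fun S => (S \subset circuits M) && `[< int_indep S >]) (fun S => #|S|) S).
by rewrite sub; apply/asboolP.
Qed.

Lemma LR_att M : exists S, [/\ S \subset circuits M, int_indep S & #|S| = lattice_rank M].
Proof.
have P0 : (set0 \subset circuits M) && `[< int_indep (set0 : {set signed T}) >].
  by rewrite sub0set; apply/asboolP => X; rewrite inE.
have [S [/andP [s /asboolP i] E]] := @bigmax_att _ (fun S => (S \subset circuits M) && `[< int_indep S >]) (fun S => #|S|) _ P0.
by exists S; split.
Qed.

Lemma LR_le M m : (forall S, S \subset circuits M -> int_indep S -> #|S| <= m) ->
  lattice_rank M <= m.
Proof. by move=> h; apply/bigmax_leqP => S /andP [s /asboolP i]; apply: h. Qed.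

Lemma LR_mono M N : circuits N \subset circuits M -> lattice_rank N <= lattice_rank M.
Proof.
move=> sNM; apply: LR_le => S s i; apply: LR_ge => //; exact: subset_trans sNM.
Qed.

Lemma rank_ge M I : om_indep M I -> #|I| <= om_rank M.
Proof. by move=> h; apply: (@leq_bigmax_cond _ (fun I => om_indep M I) (fun I => #|I|) I). Qed.

Lemma rank_le M m : (forall I, om_indep M I -> #|I| <= m) -> om_rank M <= m.
Proof. by move=> h; apply/bigmax_leqP. Qed.

Lemma rank_ground M : om_rank M <= #|ground M|.
Proof. by apply: rank_le => I /andP [s _]; apply: subset_leq_card. Qed.

Lemma rank_att M : (forall X, X \in circuits M -> supp X != set0) ->
  exists I, om_indep M I /\ #|I| = om_rank M.
Proof.
move=> ne.
have P0 : om_indep M set0.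
  rewrite /om_indep sub0set; apply/forallP => X; apply/implyP => XC.
  by rewrite subset0 ne.
by have [I [P E]] := @bigmax_att _ (fun I => om_indep M I) (fun I => #|I|) _ P0; exists I.
Qed.

Lemma rho_le M N :
  lattice_rank N + #|ground M| + om_rank N <= lattice_rank M + #|ground N| + om_rank M ->
  (rho N <= rho M)%R.
Proof.
rewrite /rho /om_corank => h.
have := rank_ground N; have := rank_ground M; lia.
Qed.

Lemma svec0 X e : e \notin supp X -> svec X e = 0%R.
Proof. by rewrite /svec /supp inE negb_or => /andP [/negbTE -> /negbTE ->]. Qed.

Lemma svec_ne0 X e : e \in supp X -> [disjoint X.1 & X.2] -> svec X e != 0%R.
Proof.
rewrite /svec /supp inE => h d.
case: (boolP (e \in X.1)) => h1.
  by rewrite (disjointFr d h1).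
by move: h; rewrite (negbTE h1) /= => ->.
Qed.

Lemma add_indep S C e : int_indep S -> (forall Y, Y \in S -> e \notin supp Y) ->
  e \in supp C -> [disjoint C.1 & C.2] -> int_indep (C |: S).
Proof.
move=> ind av eC dC.
have CS : C \notin S by apply/negP => /av; rewrite eC.
move=> X; rewrite /in_Zspan in_setU1 => /orP [/eqP -> | XS] [c hc].
  have := hc e; rewrite big1; first by move/eqP; rewrite (negbTE (svec_ne0 eC dC)).
  move=> Y /setD1P [nY]; rewrite in_setU1 (negbTE nY) /= => YS.
  by rewrite (svec0 (av _ YS)) mulr0.
have XC : X != C by apply: contraNneq CS => <-.
have E : (C |: S) :\ X = C |: (S :\ X).
  apply/setP => y; rewrite !inE; case: (eqVneq y C) => [->|] //=; by rewrite eq_sym XC.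
have CSX : C \notin S :\ X by rewrite inE (negbTE CS) andbF.
have hc' x : svec X x = (c C * svec C x + \sum_(Y in S :\ X) c Y * svec Y x)%R.
  by rewrite hc E big_setU1.
have cC : c C = 0%R.
  have := hc' e; rewrite (svec0 (av _ XS)) big1 ?addr0.
    by move/esym/eqP; rewrite mulf_eq0 (negbTE (svec_ne0 eC dC)) orbF => /eqP.
  by move=> Y; rewrite !inE => /andP [_ YS]; rewrite svec0 ?mulr0 //; apply: av.
apply: (ind X XS); exists c => x; by rewrite hc' cC mul0r add0r.
Qed.

Definition rst (e : T) X : signed T := (X.1 :\ e, X.2 :\ e).

Lemma svec_rst e X x : svec (rst e X) x = if x == e then 0%R else svec X x.
Proof. by rewrite /svec /rst !inE; case: eqP. Qed.

Lemma supp_rst e X : supp (rst e X) = supp X :\ e.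
Proof. by rewrite /supp /rst setDUl. Qed.

Lemma setD1_id (A : {set T}) e : e \notin A -> A :\ e = A.
Proof. by move=> h; apply/setP => y; rewrite !inE; case: eqP => // ->; rewrite (negbTE h). Qed.

Lemma rst_id e X : e \notin supp X -> rst e X = X.
Proof.
rewrite /supp inE negb_or => /andP [h1 h2].
by rewrite /rst !setD1_id //; case: X {h1 h2}.
Qed.

Lemma LR_lift M N e : (forall Z, Z \in circuits N -> exists2 X, X \in circuits M & Z = rst e X) ->
  lattice_rank N <= lattice_rank M.
Proof.
move=> lift; apply: LR_le => S' sub ind.
pose g Z := odflt Z [pick X in circuits M | rst e X == Z].
have gP Z : Z \in S' -> g Z \in circuits M /\ rst e (g Z) = Z.
  move=> /(subsetP sub) /lift [X XM ->]; rewrite /g; case: pickP => /=.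
    by move=> Y /andP [YM /eqP ->].
  by move/(_ X); rewrite XM eqxx.
have ginj : {in S' &, injective g}.
  by move=> Z1 Z2 /gP [_ h1] /gP [_ h2] E; rewrite -h1 -h2 E.
rewrite -(card_in_imset ginj); apply: LR_ge.
  by apply/subsetP => Y /imsetP [Z ZS ->]; case: (gP Z ZS).
move=> X /imsetP [Z ZS ->] [c hc]; apply: (ind Z ZS).
exists (fun Z' => c (g Z')) => x.
have E : [set g x | x in S'] :\ g Z = [set g x | x in S' :\ Z].
  apply/setP => Y; rewrite !inE; apply/andP/imsetP.
    move=> [nY /imsetP [Z' Z'S YE]]; subst Y; exists Z' => //; rewrite !inE Z'S andbT.
    by apply/eqP => E'; move: nY; rewrite E' eqxx.
  move=> [Z' ]; rewrite !inE => /andP [nZ Z'S] YE; subst Y; split; last by apply: imset_f.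
  apply/eqP => E'; move/eqP: nZ; apply; apply: ginj => //.
have hZ := (gP Z ZS).2.
rewrite -{1}hZ svec_rst hc E big_imset /=; last by move=> ? ? /setD1P [_ ?] /setD1P [_ ?]; apply: ginj.
case: eqP => xe.
  rewrite big1 // => Z' /setD1P [_ Z'S].
  by rewrite -(gP Z' Z'S).2 svec_rst xe eqxx mulr0.
apply: eq_bigr => Z' /setD1P [_ Z'S].
have [_ h] := gP Z' Z'S; congr (_ * _)%R; rewrite -[in RHS]h svec_rst; by case: eqP.
Qed.

End Gen.
Section OMs.
Variable T : finType.
Implicit Types (M N : OM T) (X Y Z W : signed T) (S : {set signed T}) (I : {set T}).

Definition Inv M : Prop :=
  (forall X, X \in circuits M ->
     [/\ supp X \subset ground M, [disjoint X.1 & X.2] & supp X != set0])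
  /\ (forall X Y, X \in circuits M -> Y \in circuits M ->
        supp X \subset supp Y -> supp X = supp Y).

Lemma supp_sopp X : supp (sopp X) = supp X.
Proof. by rewrite /supp /sopp /= setUC. Qed.

Lemma OM_Inv M : is_OM M -> Inv M.
Proof.
move=> [h1 [_ [h3 _]]]; split => // X Y XC YC s.
by case: (h3 X Y XC YC s) => ->; rewrite ?supp_sopp.
Qed.

Lemma om_eta M : mkOM (ground M) (circuits M) = M.
Proof. by case: M. Qed.

Lemma indep_sub M N I : I \subset ground M ->
  (forall X, X \in circuits M -> supp X \subset I -> X \in circuits N) ->
  om_indep N I -> om_indep M I.
Proof.
move=> sI h /andP [_ /forallP iN]; rewrite /om_indep sI /=.
apply/forallP => X; apply/implyP => XC; apply/negP => sX.
by have := iN X; rewrite (h X XC sX) sX.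
Qed.

Lemma Inv_del M e : Inv M -> Inv (om_delete M e).
Proof.
move=> [h1 h2]; split => /=.
  move=> X; rewrite inE => /andP [XC eX]; have [a b c] := h1 X XC; split => //.
  apply/subsetP => x xX; rewrite !inE (subsetP a x xX) andbT.
  by apply: contraNneq eX => <-.
by move=> X Y; rewrite !inE => /andP [XC _] /andP [YC _]; apply: h2.
Qed.

Lemma memK M e Z : (Z \in circuits (om_contract M e)) =
  [&& Z \in [set rst e X | X in circuits M], supp Z != set0 &
   [forall W in [set rst e X | X in circuits M],
      ~~ ((supp W != set0) && (supp W \proper supp Z))]].
Proof. by rewrite /om_contract /= inE. Qed.

Lemma Inv_con M e : Inv M -> Inv (om_contract M e).
Proof.
move=> [h1 h2]; split => /=.
  move=> Z; rewrite memK => /and3P [/imsetP [X XC ->] ne _].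
  have [a b c] := h1 X XC; split => //.
    by rewrite supp_rst; apply: setSD.
  by apply: (disjointW _ _ b); apply: subD1set.
move=> Z Z'; rewrite !memK => /and3P [ZR Zne _] /and3P [_ _ /forallP m] s.
have := m Z; rewrite ZR Zne /= properE s /= negbK => s'.
by apply/eqP; rewrite eqEsubset s s'.
Qed.

Lemma con_min M e W0 : W0 \in [set rst e X | X in circuits M] -> supp W0 != set0 ->
  exists2 W, W \in circuits (om_contract M e) & supp W \subset supp W0.
Proof.
move=> W0R W0ne.
pose P W := [&& W \in [set rst e X | X in circuits M], supp W != set0 & supp W \subset supp W0].
have PW0 : P W0 by rewrite /P W0R W0ne subxx.
case: (arg_minnP (fun W => #|supp W|) PW0) => W /and3P [WR Wne Ws] minW.
exists W => //; rewrite memK WR Wne /=.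
apply/forallP => W'; apply/implyP => W'R; apply/negP => /andP [ne pr].
have := minW W'; rewrite /P W'R ne (subset_trans (proper_sub pr) Ws) => /(_ isT).
by rewrite leqNgt proper_card.
Qed.

Lemma rho_del M e : Inv M -> (rho (om_delete M e) <= rho M)%R.
Proof.
move=> [h1 h2] ; set D := om_delete M e.
have DM : circuits D \subset circuits M.
  by apply/subsetP => X; rewrite inE => /andP [].
have indDM I : om_indep D I -> om_indep M I.
  move=> iD; apply: (indep_sub _ _ iD).
    by move: iD => /andP [/= s _]; apply: (subset_trans s); apply: subD1set.
  move=> X XC sX; rewrite inE XC /=; apply/negP => eX.
  by move: iD => /andP [/= /subsetP s _]; move: (s e (subsetP sX e eX)); rewrite !inE eqxx.
have rDM : om_rank D <= om_rank M by apply: rank_le => I /indDM; apply: rank_ge.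
case: (boolP [exists C in circuits M, e \in supp C]).
  move=> /exists_inP [C CM eC].
  have [a b _] := h1 C CM.
  have eg : e \in ground M by apply: (subsetP a).
  have [S' [s i E]] := LR_att D.
  have av Y : Y \in S' -> e \notin supp Y.
    by move=> /(subsetP s); rewrite inE => /andP [].
  have CS : C \notin S' by apply/negP => /av; rewrite eC.
  have := LR_ge (M := M) (S := C |: S') _ (add_indep i av eC b).
  rewrite cardsU1 CS E => /(_ _); rewrite subUset sub1set CM (subset_trans s DM) => /(_ isT) LRle.
  apply: rho_le; rewrite /= (cardsD1 e (ground M)) eg; lia.
rewrite negb_exists => /forallP nC.
have CD : circuits D = circuits M.
  apply/setP => X; rewrite inE; case: (boolP (X \in circuits M)) => //= XC.
  by have := nC X; rewrite XC.
case: (boolP (e \in ground M)) => eg; last first.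
  have -> : D = M; last exact: lexx.
  by rewrite -[RHS]om_eta -CD /D /om_delete /= setD1_id.
have LRle : lattice_rank D <= lattice_rank M by apply: LR_mono; rewrite CD.
have [I [iI EI]] : exists I, om_indep D I /\ #|I| = om_rank D.
  by apply: rank_att => X; rewrite CD => /h1 [].
have eI : e \notin I by move: iI => /andP [/subsetP s _]; apply/negP => /s; rewrite !inE eqxx.
have : om_indep M (e |: I).
  rewrite /om_indep subUset sub1set eg /=.
  move: iI => /andP [/= s /forallP f]; rewrite (subset_trans s (subD1set _ _)) /=.
  apply/forallP => X; apply/implyP => XC; apply/negP => sX.
  have eX : e \notin supp X by have := nC X; rewrite XC.
  have sXI : supp X \subset I.
    apply/subsetP => x xX; have := subsetP sX x xX; rewrite in_setU1.
    by case: eqP => [xe|//]; move: eX; rewrite -xe xX.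
  by have := f X; rewrite inE XC eX sXI.
move=> /rank_ge; rewrite cardsU1 eI EI => rle.
apply: rho_le; rewrite /= (cardsD1 e (ground M)) eg; lia.
Qed.

End OMs.
Section Con.
Variable T : finType.
Implicit Types (M N : OM T) (X Y Z W : signed T) (S : {set signed T}) (I : {set T}).

Lemma rho_con M e : Inv M -> (rho (om_contract M e) <= rho M)%R.
Proof.
move=> [h1 h2]; set K := om_contract M e.
have lift Z : Z \in circuits K -> exists2 X, X \in circuits M & Z = rst e X.
  by rewrite /K memK => /and3P [/imsetP [X XC ->] _ _]; exists X.
have Kne Z : Z \in circuits K -> supp Z != set0.
  by rewrite /K memK => /and3P [].
have Kg : ground K = ground M :\ e by [].
pose lp := forall Y, Y \in circuits M -> e \in supp Y -> supp Y = [set e].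
have KofM : lp -> forall X, X \in circuits M -> e \notin supp X -> X \in circuits K.
  move=> l X XC eX; rewrite /K memK.
  have [_ _ ne] := h1 X XC.
  rewrite ne /=; apply/andP; split.
    by apply/imsetP; exists X => //; rewrite rst_id.
  apply/forallP => W; apply/implyP => /imsetP [Y YC ->]; rewrite supp_rst.
  case: (boolP (e \in supp Y)) => eY.
    by rewrite (l Y YC eY) setDv eqxx.
  rewrite setD1_id // properE.
  case: (boolP (supp Y \subset supp X)) => s; last by rewrite andbF.
  by rewrite (h2 _ _ YC XC s) subxx !andbF.
have KinM : lp -> forall Z, Z \in circuits K -> (Z \in circuits M) && (e \notin supp Z).
  move=> l Z ZK; have [X XC E] := lift Z ZK.
  have := Kne Z ZK; rewrite E supp_rst.
  case: (boolP (e \in supp X)) => eX.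
    by rewrite (l X XC eX) setDv eqxx.
  by move=> _; rewrite rst_id // XC /= !inE eqxx.
have rKM : lp -> om_rank K <= om_rank M.
  move=> l; apply: rank_le => I iK; apply: rank_ge.
  apply: (indep_sub _ _ iK).
    by move: iK => /andP [/= s _]; apply: (subset_trans s); apply: subD1set.
  move=> X XC sX; apply: (KofM l X XC); apply/negP => eX.
  by move: iK => /andP [/= /subsetP s _]; move: (s e (subsetP sX e eX)); rewrite !inE eqxx.
case: (boolP (e \in ground M)) => eg; last first.
  have l : lp by move=> Y YC eY; have [a _ _] := h1 Y YC; move: eg; rewrite (subsetP a e eY).
  have LRle : lattice_rank K <= lattice_rank M.
    by apply: LR_mono; apply/subsetP => Z /(KinM l) /andP [].
  have rle := rKM l; apply: rho_le; rewrite Kg setD1_id //; lia.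
case: (boolP [exists L in circuits M, supp L == [set e]]).
  move=> /exists_inP [L LC /eqP LE].
  have l : lp.
    move=> Y YC eY; rewrite -LE; apply/esym; apply: h2 => //.
    by rewrite LE sub1set.
  have [S' [s i E]] := LR_att K.
  have av Y : Y \in S' -> e \notin supp Y.
    by move=> /(subsetP s) /(KinM l) /andP [].
  have eL : e \in supp L by rewrite LE set11.
  have [_ b _] := h1 L LC.
  have CS : L \notin S' by apply/negP => /av; rewrite eL.
  have := LR_ge (M := M) (S := L |: S') _ (add_indep i av eL b).
  rewrite cardsU1 CS E => /(_ _); rewrite subUset sub1set LC.
  have -> : S' \subset circuits M by apply/subsetP => Z /(subsetP s) /(KinM l) /andP [].
  move=> /(_ isT) LRle.
  have rle := rKM l; apply: rho_le; rewrite Kg (cardsD1 e (ground M)) eg; lia.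
rewrite negb_exists => /forallP nL.
have LRle : lattice_rank K <= lattice_rank M by apply: LR_lift lift.
have [I [iI EI]] : exists I, om_indep K I /\ #|I| = om_rank K by apply: rank_att.
have eI : e \notin I by move: iI => /andP [/subsetP s _]; apply/negP => /s; rewrite !inE eqxx.
have : om_indep M (e |: I).
  rewrite /om_indep subUset sub1set eg /=.
  move: iI => /andP [/= s /forallP f]; rewrite (subset_trans s (subD1set _ _)) /=.
  apply/forallP => X; apply/implyP => XC; apply/negP => sX.
  have [_ _ Xne] := h1 X XC.
  case: (boolP (supp (rst e X) == set0)) => W0e.
    have : supp X \subset [set e].
      apply/subsetP => x xX; move/eqP/setP: W0e => /(_ x); rewrite supp_rst !inE.
      by move: xX; rewrite /supp inE => -> /negbT; rewrite andbT negbK.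
    rewrite subset1 (negbTE Xne) orbF => /eqP XE.
    by have := nL X; rewrite XC XE eqxx.
  have [W WK sW] := con_min (imset_f _ XC) W0e.
  have := f W; rewrite WK /=; apply/negP/negPn.
  apply: (subset_trans sW); rewrite supp_rst; apply/subsetP => x; rewrite in_setD1 => /andP [xe xX].
  by have := subsetP sX x xX; rewrite in_setU1 (negbTE xe).
move=> /rank_ge; rewrite cardsU1 eI EI => rle.
apply: rho_le; rewrite Kg (cardsD1 e (ground M)) eg; lia.
Qed.

End Con.
Section Push.
Variables (A B : finType) (h : A -> B).
Hypothesis hinj : injective h.

Definition phi (X : signed A) : signed B := (h @: X.1, h @: X.2).

Lemma phi_inj : injective phi.
Proof.
move=> [X1 X2] [Y1 Y2]; rewrite /phi /= => [[E1 E2]].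
by rewrite (imset_inj hinj E1) (imset_inj hinj E2).
Qed.

Lemma svec_in (X : signed A) x : svec (phi X) (h x) = svec X x.
Proof. by rewrite /svec /phi /= !(mem_imset _ _ hinj). Qed.

Lemma notin_img (U : {set A}) z : (forall x, h x != z) -> (z \in h @: U) = false.
Proof. by move=> nz; apply/negbTE/negP => /imsetP [x _ E]; move: (nz x); rewrite E eqxx. Qed.

Lemma svec_out (X : signed A) z : (forall x, h x != z) -> svec (phi X) z = 0%R.
Proof. by move=> nz; rewrite /svec /phi /= !notin_img. Qed.

Lemma supp_phi (X : signed A) : supp (phi X) = h @: supp X.
Proof. by rewrite /supp /phi imsetU. Qed.

Lemma sum_restr (S : {set signed B}) (S1 : {set signed A}) X (F : signed B -> int) :
  phi @: S1 \subset S -> X \in S1 ->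
  (\sum_(Y in S :\ phi X | Y \in phi @: (S1 :\ X)) F Y = \sum_(X' in S1 :\ X) F (phi X'))%R.
Proof.
move=> sub XS.
rewrite -(big_imset _ (h := phi)) /=; last by move=> ? ? _ _; apply: phi_inj.
apply: eq_bigl => Y; rewrite andb_idl // => /imsetP [X' /setD1P [nX X'S] ->].
rewrite in_setD1 (subsetP sub _ (imset_f _ X'S)) andbT.
by apply: contra_neq nX => /phi_inj.
Qed.

Lemma push (S : {set signed B}) (S1 : {set signed A}) :
  int_indep S1 -> phi @: S1 \subset S ->
  (forall Y, Y \in S -> Y \notin phi @: S1 -> forall x, svec Y (h x) = 0%R) ->
  forall X, X \in S1 -> ~ in_Zspan (S :\ phi X) (svec (phi X)).
Proof.
move=> ind sub out X XS [c hc]; apply: (ind X XS).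
exists (fun X' => c (phi X')) => x.
rewrite -svec_in hc (bigID (fun Y => Y \in phi @: (S1 :\ X))) /= sum_restr //.
rewrite [X in (_ + X)%R]big1 ?addr0.
  by apply: eq_bigr => X' _; rewrite svec_in.
move=> Y /andP [/setD1P [nY YS] nI]; rewrite out ?mulr0 //.
apply: contra nI => /imsetP [X' X'S E]; apply/imsetP; exists X' => //.
by rewrite in_setD1 X'S andbT; apply: contra_neq nY => <-.
Qed.

Definition psi (Y : signed B) : signed A := ([set x | h x \in Y.1], [set x | h x \in Y.2]).

Lemma psi_phi X : psi (phi X) = X.
Proof.
case: X => X1 X2; rewrite /psi /phi /=.
by congr pair; apply/setP => x; rewrite inE (mem_imset _ _ hinj).
Qed.

Lemma pull (S : {set signed B}) : int_indep S -> int_indep [set X | phi X \in S].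
Proof.
move=> ind X; rewrite inE => XS [c hc]; apply: (ind _ XS).
set S1 := [set X | phi X \in S].
have sub : phi @: S1 \subset S by apply/subsetP => Y /imsetP [X' ]; rewrite inE => ? ->.
have XS1 : X \in S1 by rewrite inE.
exists (fun Y => if Y \in phi @: (S1 :\ X) then c (psi Y) else 0%R) => z.
rewrite (bigID (fun Y => Y \in phi @: (S1 :\ X))) /= sum_restr //.
rewrite [X in (_ + X)%R]big1 ?addr0; last by move=> Y /andP [_ /negbTE ->]; rewrite mul0r.
under eq_bigr => X' X'S do rewrite imset_f // psi_phi.
case: (pickP (fun x => h x == z)) => [x /eqP <-|nz].
  by rewrite svec_in hc; apply: eq_bigr => X' _; rewrite svec_in.
rewrite svec_out; last by move=> x; rewrite nz.
by rewrite big1 // => X' _; rewrite svec_out ?mulr0 // => x; rewrite nz.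
Qed.

End Push.
Section DSum.
Variables (T1 T2 : finType) (M1 : OM T1) (M2 : OM T2).
Hypotheses (ne1 : forall X, X \in circuits M1 -> supp X != set0)
           (ne2 : forall X, X \in circuits M2 -> supp X != set0).

Local Notation phl := (phi (@inl T1 T2)).
Local Notation phr := (phi (@inr T1 T2)).
Local Notation Msum := (om_dsum M1 M2).

Lemma circ_sum : circuits Msum = phl @: circuits M1 :|: phr @: circuits M2.
Proof. by []. Qed.

Lemma in_l (A1 : {set T1}) (A2 : {set T2}) x : (inl x \in inl @: A1 :|: inr @: A2) = (x \in A1).
Proof. by rewrite inE (mem_imset _ _ inl_inj) (notin_img (h := inr)) ?orbF. Qed.

Lemma in_r (A1 : {set T1}) (A2 : {set T2}) x : (inr x \in inl @: A1 :|: inr @: A2) = (x \in A2).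
Proof. by rewrite inE (mem_imset _ _ inr_inj) (notin_img (h := inl)). Qed.

Lemma card_lr (A1 : {set T1}) (A2 : {set T2}) : #|inl @: A1 :|: inr @: A2| = #|A1| + #|A2|.
Proof.
rewrite cardsU (card_imset _ inl_inj) (card_imset _ inr_inj).
have -> : inl @: A1 :&: inr @: A2 = set0.
  apply/setP => z; rewrite !inE; case: z => x.
    by rewrite (mem_imset _ _ inl_inj) (notin_img (h := inr)) ?andbF.
  by rewrite (mem_imset _ _ inr_inj) (notin_img (h := inl)).
by rewrite cards0 subn0.
Qed.

Lemma sub_lr (I : {set T1 + T2}) :
  I \subset inl @: [set x | inl x \in I] :|: inr @: [set y | inr y \in I].
Proof. by apply/subsetP => -[x|y] h; rewrite ?in_l ?in_r inE. Qed.

Lemma phl_phr X Y : phl X = phr Y -> supp Y = set0.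
Proof.
move=> E; apply/setP => y; rewrite in_set0; apply/negbTE/negP => yY.
have : inr y \in supp (phr Y) by rewrite supp_phi (mem_imset _ _ inr_inj).
by rewrite -E supp_phi (notin_img (h := inl)).
Qed.

Lemma phl_phr' X Y : phl X = phr Y -> supp X = set0.
Proof.
move=> E; apply/setP => y; rewrite in_set0; apply/negbTE/negP => yY.
have : inl y \in supp (phl X) by rewrite supp_phi (mem_imset _ _ inl_inj).
by rewrite E supp_phi (notin_img (h := inr)).
Qed.

Lemma rank_sum : om_rank Msum = om_rank M1 + om_rank M2.
Proof.
apply/eqP; rewrite eqn_leq; apply/andP; split.
  apply: rank_le => I /andP [sI /forallP f].
  set I1 := [set x | inl x \in I]; set I2 := [set y | inr y \in I].
  have i1 : om_indep M1 I1.
    rewrite /om_indep; apply/andP; split.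
      by apply/subsetP => x; rewrite inE => /(subsetP sI); rewrite /= in_l.
    apply/forallP => X; apply/implyP => XC; apply/negP => sX.
    have := f (phl X); rewrite circ_sum inE imset_f //= supp_phi.
    apply/negP/negPn/subsetP => z /imsetP [x xX ->].
    by have := subsetP sX x xX; rewrite inE.
  have i2 : om_indep M2 I2.
    rewrite /om_indep; apply/andP; split.
      by apply/subsetP => x; rewrite inE => /(subsetP sI); rewrite /= in_r.
    apply/forallP => X; apply/implyP => XC; apply/negP => sX.
    have := f (phr X); rewrite circ_sum inE orbC imset_f //= supp_phi.
    apply/negP/negPn/subsetP => z /imsetP [x xX ->].
    by have := subsetP sX x xX; rewrite inE.
  apply: leq_trans (subset_leq_card (sub_lr I)) _; rewrite card_lr.
  by apply: leq_add; apply: rank_ge.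
have [I1 [i1 E1]] := rank_att ne1; have [I2 [i2 E2]] := rank_att ne2.
rewrite -E1 -E2 -card_lr; apply: rank_ge.
move: i1 i2 => /andP [s1 /forallP f1] /andP [s2 /forallP f2].
rewrite /om_indep /= (setUSS (imsetS _ s1) (imsetS _ s2)) /=.
apply/forallP => Y; apply/implyP; rewrite inE => /orP [] /imsetP [X XC ->]; apply/negP.
  rewrite supp_phi.
  move=> sX; have := f1 X; rewrite XC /=; apply/negP/negPn/subsetP => x xX.
  by have := subsetP sX _ (imset_f _ xX); rewrite in_l.
rewrite supp_phi.
move=> sX; have := f2 X; rewrite XC /=; apply/negP/negPn/subsetP => x xX.
by have := subsetP sX _ (imset_f _ xX); rewrite in_r.
Qed.

Lemma LR_sum : lattice_rank Msum = lattice_rank M1 + lattice_rank M2.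
Proof.
apply/eqP; rewrite eqn_leq; apply/andP; split.
  apply: LR_le => S sS iS.
  set S1 := [set X | phl X \in S]; set S2 := [set X | phr X \in S].
  have s1 : S1 \subset circuits M1.
    apply/subsetP => X; rewrite inE => /(subsetP sS); rewrite circ_sum inE.
    case/orP => /imsetP [X' X'C E].
      by rewrite (phi_inj inl_inj E).
    by move: (ne2 X'C); rewrite (phl_phr E) eqxx.
  have s2 : S2 \subset circuits M2.
    apply/subsetP => X; rewrite inE => /(subsetP sS); rewrite circ_sum inE.
    case/orP => /imsetP [X' X'C E].
      by move: (ne1 X'C); rewrite (phl_phr' (esym E)) eqxx.
    by rewrite (phi_inj inr_inj E).
  have sub : S \subset phl @: S1 :|: phr @: S2.
    apply/subsetP => Y YS; have := subsetP sS Y YS; rewrite circ_sum !inE.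
    by case/orP => /imsetP [X _ E]; rewrite E in YS *; rewrite imset_f ?orbT // inE.
  apply: leq_trans (subset_leq_card sub) _.
  rewrite cardsU !card_imset; try exact: (phi_inj inl_inj); try exact: (phi_inj inr_inj).
  apply: leq_trans (leq_subr _ _) _.
  apply: leq_add; apply: LR_ge => //; [exact: (pull inl_inj iS) | exact: (pull inr_inj iS)].
have [S1 [s1 i1 E1]] := LR_att M1; have [S2 [s2 i2 E2]] := LR_att M2.
rewrite -E1 -E2.
have -> : #|S1| + #|S2| = #|phl @: S1 :|: phr @: S2|.
  rewrite cardsU !card_imset; try exact: (phi_inj inl_inj); try exact: (phi_inj inr_inj).
  have -> : phl @: S1 :&: phr @: S2 = set0.
    apply/setP => Y; rewrite !inE; apply/negbTE/negP => /andP [/imsetP [X _ ->] /imsetP [X' X'S E]].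
    by move: (ne2 (subsetP s2 _ X'S)); rewrite (phl_phr E) eqxx.
  by rewrite cards0 subn0.
apply: LR_ge; first by rewrite circ_sum; apply: setUSS; apply: imsetS.
move=> Y; rewrite inE => /orP [] /imsetP [X XS ->].
  apply: (push inl_inj i1 (subsetUl _ _)) => // Y' Y'S nY' x.
  move: Y'S; rewrite inE (negbTE nY') /= => /imsetP [X' _ ->].
  by rewrite svec_out.
apply: (push inr_inj i2 (subsetUr _ _)) => // Y' Y'S nY' x.
move: Y'S; rewrite inE orbC (negbTE nY') /= => /imsetP [X' _ ->].
by rewrite svec_out.
Qed.

Lemma rho_sum : rho Msum = (rho M1 + rho M2)%R.
Proof.
rewrite /rho /om_corank LR_sum rank_sum /= card_lr.
have := rank_ground M1; have := rank_ground M2; lia.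
Qed.

End DSum.
Theorem mainTheorem2 :
  (forall (T1 T2 : finType) (M1 : OM T1) (M2 : OM T2),
      is_OM M1 -> is_OM M2 ->
      rho (om_dsum M1 M2) = (rho M1 + rho M2)%R)
  /\ (forall (T : finType) (M N : OM T),
      is_OM M -> om_minor N M -> (rho N <= rho M)%R)
  /\ (forall (T : finType) (M : OM T) (e : T),
      is_OM M -> e \in ground M ->
      (rho (om_contract M e) <= rho M)%R /\ (rho (om_delete M e) <= rho M)%R).
Proof.
split.
  move=> T1 T2 M1 M2 /OM_Inv [h1 _] /OM_Inv [h2 _]; apply: rho_sum => X XC.
    by case: (h1 X XC).
  by case: (h2 X XC).
split.
  move=> T M N /OM_Inv iM mn.
  suff : Inv N /\ (rho N <= rho M)%R by case.
  elim: mn iM => {M N} [M|N M e _ IH|N M e _ IH] iM.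
  - by split => //; rewrite lexx.
  - have [iN le] := IH iM; split; first exact: Inv_del.
    exact: le_trans (rho_del e iN) le.
  - have [iN le] := IH iM; split; first exact: Inv_con.
    exact: le_trans (rho_con e iN) le.
move=> T M e /OM_Inv iM _; split; [exact: rho_con | exact: rho_del].
Qed.
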